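(* In the bootstrap setting, let $|\alpha|+|\beta|+|\sigma|\le10$. For every $\eta>0$ there is $C_\eta>0$ (depending on $\eta,d_0,\gamma$) such that for every $T\in[0,T_{\mathrm{boot}})$, $$T^{\alpha,\beta,\sigma}_2\le\eta\big\|(1+t)^{-\frac12-\frac\delta2}W_{\alpha,\beta,\sigma}D^{\alpha,\beta,\sigma}g\big\|^2_{L^2([0,T];L^2_xL^2_v)}+C_\eta\sum_{\substack{|\beta'|\le|\beta|,\ |\sigma'|\le|\sigma|\\|\beta'|+|\sigma'|\le|\beta|+|\sigma|-1}}\big\|(1+t)^{-\frac12-\frac\delta2}W_{\alpha,\beta',\sigma'}D^{\alpha,\beta',\sigma'}g\big\|^2_{L^2([0,T];L^2_xL^2_v)},$$ where $$T^{\alpha,\beta,\sigma}_2:=\sum_{\substack{|\beta'|\le|\beta|,\ |\sigma'|\le|\sigma|\\|\beta'|+|\sigma'|\le|\beta|+|\sigma|-1}}\Big\|\frac{1}{(1+t)^{1+\delta}}W^2_{\alpha,\beta,\sigma}|D^{\alpha,\beta,\sigma}g|\,|D^{\alpha,\beta',\sigma'}g|\Big\|_{L^1([0,T];L^1_xL^1_v)}.$$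
   Context: Notation: $\langle z\rangle=\sqrt{1+|z|^2}$; repeated lower-case indices summed over $\{1,2,3\}$. Multi-indices $\alpha,\beta,\sigma\in(\mathbb N\cup\{0\})^3$ with $|\alpha|=\sum\alpha_l$; sums over primed multi-indices run over all multi-indices satisfying the displayed constraints. $D^{\alpha,\beta,\sigma}=\partial_x^\alpha\partial_v^\beta Y^\sigma$ with $Y^\sigma=\prod_lY_l^{\sigma_l}$, $Y_l=(t+1)\partial_{x_l}+\partial_{v_l}$. $\nu_{\alpha,\beta,\sigma}=20-\frac32(|\alpha|+|\sigma|)-\frac12|\beta|$, $\omega_{\alpha,\beta,\sigma}=20-\frac32|\sigma|-\frac12(|\alpha|+|\beta|)$, $W_{\alpha,\beta,\sigma}=\langle v\rangle^{\nu_{\alpha,\beta,\sigma}}\langle x-(t+1)v\rangle^{\omega_{\alpha,\beta,\sigma}}$. Mixed norms take $v$ first, then $x$, then $t$. Bootstrap setting: fix $\gamma\in[0,1)$, $d_0>0$, $\delta\in(0,\frac18)$; $a_{ij}(z)=(\delta_{ij}-z_iz_j/|z|^2)|z|^{\gamma+2}$, $c=\partial^2_{z_iz_j}a_{ij}$, $\bar a_{ij}=\int a_{ij}(v-v_* )f(t,x,v_* )dv_*$, $\bar c=\int c(v-v_* )f(t,x,v_* )dv_*$; Landau equation $\partial_tf+v_i\partial_{x_i}f=\bar a_{ij}\partial^2_{v_iv_j}f-\bar cf$; $d(t)=d_0(1+(1+t)^{-\delta})$. Energy norm for $T>0$: $\|h\|^2_{E_T}=\sum_{|\alpha|+|\beta|+|\sigma|\le10}(1+T)^{-|\beta|(1+\delta)}\big(\|W_{\alpha,\beta,\sigma}D^{\alpha,\beta,\sigma}h\|^2_{L^\infty([0,T);L^2_xL^2_v)}+\|\langle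 v\rangle^{1/2}W_{\alpha,\beta,\sigma}D^{\alpha,\beta,\sigma}h\|^2_{L^2([0,T);L^2_xL^2_v)}\big)$. $\epsilon_0=\epsilon_0(d_0,\gamma)>0$ is a fixed sufficiently small constant, $\epsilon\in[0,\epsilon_0]$, and $f_{\mathrm{ini}}$ satisfies $\sum_{|\alpha|+|\beta|+|\sigma|\le10}\|\langle v\rangle^{20-\frac32|\alpha|-\frac12|\beta|-\frac32|\sigma|}\langle x-v\rangle^{20-\frac32|\sigma|-\frac12|\beta|-\frac12|\alpha|}\partial_x^\alpha\partial_v^\beta(\partial_x+\partial_v)^\sigma(e^{2d_0\langle v\rangle}f_{\mathrm{ini}})\|^2_{L^2_xL^2_v}<\epsilon$. $T_{\mathrm{boot}}>0$ and $f:[0,T_{\mathrm{boot}})\times\mathbb R^3\times\mathbb R^3\to\mathbb R$ is a (sufficiently regular) solution of the Landau equation with $f\ge0$, $f(0)=f_{\mathrm{ini}}$; $g=e^{d(t)\langle v\rangle}f$; and $\|g\|_{E_T}\le\epsilon^{3/4}$ for all $T\in[0,T_{\mathrm{boot}})$. $A\lesssim B$ means $A\le CB$ with $C$ depending only on $d_0,\gamma$. *)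

(* Defs.v *)
From HB Require Import structures.
From mathcomp Require Import all_boot all_order all_algebra.
From mathcomp Require Import all_classical all_reals all_analysis ess_sup_inf.
Set Implicit Arguments. Unset Strict Implicit. Unset Printing Implicit Defensive.
Import Order.TTheory GRing.Theory Num.Theory numFieldNormedType.Exports.
Local Open Scope classical_set_scope.
Local Open Scope ring_scope.

Section LandauDefs.
Context {R : realType}.

(* R^3, represented as R * R * R: it carries both the product normed-module
   structure (for derivatives) and the product measurable structure. *)
Definition V3 := (R * R * R)%type.

Definition i0 : 'I_3 := @Ordinal 3 0 isT.
Definition i1 : 'I_3 := @Ordinal 3 1 isT.
Definition i2 : 'I_3 := @Ordinal 3 2 isT.

Definition cmp (z : V3) (i : 'I_3) : R :=
  match val i with 0%N => z.1.1 | 1%N => z.1.2 | _ => z.2 end.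
Definition ev (i : 'I_3) : V3 :=
  (((val i == 0%N)%:R, (val i == 1%N)%:R), (val i == 2%N)%:R).
Definition enorm (z : V3) : R := Num.sqrt (\sum_(i < 3) cmp z i ^+ 2).
Definition jb (z : V3) : R := Num.sqrt (1 + enorm z ^+ 2).

Definition phasefun := R -> V3 -> V3 -> R.

Definition dx (l : 'I_3) (h : phasefun) : phasefun :=
  fun t x v => 'D_((ev l, 0) : V3 * V3) (fun p : V3 * V3 => h t p.1 p.2) (x, v).
Definition dv (l : 'I_3) (h : phasefun) : phasefun :=
  fun t x v => 'D_((0, ev l) : V3 * V3) (fun p : V3 * V3 => h t p.1 p.2) (x, v).
Definition Yf (l : 'I_3) (h : phasefun) : phasefun :=
  fun t x v => (t + 1) * dx l h t x v + dv l h t x v.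
Definition Zf (l : 'I_3) (h : phasefun) : phasefun :=
  fun t x v => dx l h t x v + dv l h t x v.

Definition mindex := 'I_3 -> nat.
Definition mabs (a : mindex) : nat := (\sum_(i < 3) a i)%N.
Definition mi_of (a : {ffun 'I_3 -> 'I_11}) : mindex := fun i => val (a i).

Definition opow (P : 'I_3 -> phasefun -> phasefun) (a : mindex) (h : phasefun)
  : phasefun :=
  iter (a i0) (P i0) (iter (a i1) (P i1) (iter (a i2) (P i2) h)).

Definition Dop (a b s : mindex) (h : phasefun) : phasefun :=
  opow dx a (opow dv b (opow Yf s h)).

Definition nu (a b s : mindex) : R :=
  20 - 3 / 2 * (mabs a + mabs s)%:R - 1 / 2 * (mabs b)%:R.
Definition om (a b s : mindex) : R :=
  20 - 3 / 2 * (mabs s)%:R - 1 / 2 * (mabs a + mabs b)%:R.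
Definition W (a b s : mindex) (t : R) (x v : V3) : R :=
  jb v `^ nu a b s * jb (x - (t + 1) *: v) `^ om a b s.

Definition leb3 := ((@lebesgue_measure R \x @lebesgue_measure R)
                      \x @lebesgue_measure R)%E.

Definition L2xv2 (F : V3 -> V3 -> R) : \bar R :=
  (\int[leb3]_x \int[leb3]_v ((F x v) ^+ 2)%:E)%E.
Definition L2T2 (T : R) (F : phasefun) : \bar R :=
  (\int[@lebesgue_measure R]_(t in `[0%R, T[) L2xv2 (F t))%E.
Definition Linf2 (T : R) (F : phasefun) : \bar R :=
  ess_sup (@lebesgue_measure R)
    (fun t : R => if (0 <= t < T)%R then L2xv2 (F t) else -oo)%E.

Definition Enorm2 (delta T : R) (h : phasefun) : \bar R :=
  (\sum_(a : {ffun 'I_3 -> 'I_11}) \sum_(b : {ffun 'I_3 -> 'I_11})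
   \sum_(s : {ffun 'I_3 -> 'I_11} |
          (mabs (mi_of a) + mabs (mi_of b) + mabs (mi_of s) <= 10)%N)
    ((1 + T) `^ (- (mabs (mi_of b))%:R * (1 + delta)))%:E *
    (Linf2 T (fun t x v => W (mi_of a) (mi_of b) (mi_of s) t x v *
                           Dop (mi_of a) (mi_of b) (mi_of s) h t x v)%R
     + L2T2 T (fun t x v => jb v `^ (1 / 2) * W (mi_of a) (mi_of b) (mi_of s) t x v *
                           Dop (mi_of a) (mi_of b) (mi_of s) h t x v)%R))%E.

Definition initial_small (d0 eps : R) (f_ini : V3 -> V3 -> R) : Prop :=
  (\sum_(a : {ffun 'I_3 -> 'I_11}) \sum_(b : {ffun 'I_3 -> 'I_11})
   \sum_(s : {ffun 'I_3 -> 'I_11} |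
          (mabs (mi_of a) + mabs (mi_of b) + mabs (mi_of s) <= 10)%N)
    L2xv2 (fun x v =>
      jb v `^ nu (mi_of a) (mi_of b) (mi_of s) *
      jb (x - v) `^ om (mi_of a) (mi_of b) (mi_of s) *
      opow dx (mi_of a) (opow dv (mi_of b) (opow Zf (mi_of s)
        (fun _ y w => expR (2 * d0 * jb w) * f_ini y w))) 0 x v)%R
   < eps%:E)%E.

Definition aij (gam : R) (i j : 'I_3) (z : V3) : R :=
  ((i == j)%:R - cmp z i * cmp z j / enorm z ^+ 2) * enorm z `^ (gam + 2).
Definition cL (gam : R) (z : V3) : R :=
  \sum_(i < 3) \sum_(j < 3) 'D_(ev i) ('D_(ev j) (aij gam i j)) z.
Definition abar (gam : R) (f : phasefun) (i j : 'I_3) (t : R) (x v : V3) : R :=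
  fine (\int[leb3]_w ((aij gam i j (v - w) * f t x w)%:E))%E.
Definition cbar (gam : R) (f : phasefun) (t : R) (x v : V3) : R :=
  fine (\int[leb3]_w ((cL gam (v - w) * f t x w)%:E))%E.

Definition landau_eq (gam Tboot : R) (f : phasefun) : Prop :=
  forall t x v, 0 < t < Tboot ->
    'D_1 (fun s => f s x v) t + \sum_(i < 3) cmp v i * dx i f t x v
    = \sum_(i < 3) \sum_(j < 3) abar gam f i j t x v * dv i (dv j f) t x v
      - cbar gam f t x v * f t x v.

Definition iterD (ds : seq (V3 * V3)) (F : V3 * V3 -> R) : V3 * V3 -> R :=
  foldr (fun d G => 'D_d G) F ds.

(* "sufficiently regular": smooth in (x,v), differentiable in t,
   and the coefficient integrals are Lebesgue integrable *)
Definition regular (gam Tboot : R) (f : phasefun) : Prop :=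
  [/\ (forall t, 0 <= t < Tboot -> forall ds p d,
         derivable (iterD ds (fun p : V3 * V3 => f t p.1 p.2)) p d),
      (forall t x v, 0 < t < Tboot -> derivable (fun s => f s x v) t 1) &
      (forall t x v, 0 <= t < Tboot ->
         (forall i j, leb3.-integrable setT
                        (fun w => (aij gam i j (v - w) * f t x w)%:E)) /\
         leb3.-integrable setT (fun w => (cL gam (v - w) * f t x w)%:E))].

Definition dfun (d0 delta t : R) : R := d0 * (1 + (1 + t) `^ (- delta)).
Definition gof (d0 delta : R) (f : phasefun) : phasefun :=
  fun t x v => expR (dfun d0 delta t * jb v) * f t x v.

Definition wL2 (delta T : R) (a b s : mindex) (h : phasefun) : \bar R :=
  (\int[@lebesgue_measure R]_(t in `[0%R, T])
     L2xv2 (fun x v => (1 + t) `^ (- (1 / 2) - delta / 2) * W a b s t x v *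
                       Dop a b s h t x v)%R)%E.

Definition primed (b s : mindex) (b' s' : {ffun 'I_3 -> 'I_11}) : bool :=
  [&& (mabs (mi_of b') <= mabs b)%N, (mabs (mi_of s') <= mabs s)%N &
      (mabs (mi_of b') + mabs (mi_of s') + 1 <= mabs b + mabs s)%N].

Definition T2 (delta T : R) (a b s : mindex) (h : phasefun) : \bar R :=
  (\sum_(b' : {ffun 'I_3 -> 'I_11}) \sum_(s' : {ffun 'I_3 -> 'I_11} | primed b s b' s')
    \int[@lebesgue_measure R]_(t in `[0%R, T])
      \int[leb3]_x \int[leb3]_v
        ((1 / ((1 + t) `^ (1 + delta)) * W a b s t x v ^+ 2 *
          `|Dop a b s h t x v| * `|Dop a (mi_of b') (mi_of s') h t x v|)%:E))%E.

End LandauDefs.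

(* Main.v *)
Require Import Defs.
From HB Require Import structures.
From mathcomp Require Import all_boot all_order all_algebra.
From mathcomp Require Import all_classical all_reals all_analysis ess_sup_inf measurable_realfun.
From mathcomp Require Import ring lra.
Import Order.TTheory GRing.Theory Num.Theory numFieldNormedType.Exports.
Local Open Scope classical_set_scope.
Local Open Scope ring_scope.
Lemma prod_sf d1 d2 (T1 : measurableType d1) (T2 : measurableType d2) (R : realType)
 (m1 : {measure set T1 -> \bar R}) (sf1 : sigma_finite setT m1)
 (m2 : {sigma_finite_measure set T2 -> \bar R}) : sigma_finite setT (m1 \x m2)%E.
Proof.
have /sigma_finiteP[F [TF ndF Foo]] := sf1.
have /sigma_finiteP[G [TG ndG Goo]] := sigma_finiteT m2.
exists (fun n => F n `*` G n).
 rewrite -setXTT TF TG predeqE => -[x y]; split.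
    move=> [/= [n _ Fnx] [k _ Gky]]; exists (maxn n k) => //; split.
    - by move: x Fnx; exact/subsetPset/ndF/leq_maxl.
    - by move: y Gky; exact/subsetPset/ndG/leq_maxr.
  by move=> [n _ []/= ? ?]; split; exists n.
move=> k; have [? ?] := Foo k; have [? ?] := Goo k.
split; first exact: measurableX.
by rewrite product_measure1E// lte_mul_pinfty// ge0_fin_numE.
Qed.

Section S. Variable R : realType.
Definition M3 := ((@lebesgue_measure R \x @lebesgue_measure R) \x @lebesgue_measure R)%E.
HB.instance Definition _ := Measure.copy M3 ((@lebesgue_measure R \x @lebesgue_measure R) \x @lebesgue_measure R)%E.
Lemma M3sf : sigma_finite setT M3.
Proof. apply: prod_sf; apply: prod_sf; exact: sigma_finiteT. Qed.
HB.instance Definition _ := Measure_isSigmaFinite.Build _ _ _ M3 M3sf.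
Lemma cmpB (x v : @V3 R) (c : R) i : cmp (x - c *: v) i = cmp x i - c * cmp v i.
Proof. by case: i => [[|[|[|k]]] Hk] //=. Qed.
Lemma mcmp i : measurable_fun setT (fun z : @V3 R => cmp z i).
Proof.
case: i => [[|[|[|k]]] Hk] //=; rewrite /cmp /=.
- exact: measurableT_comp measurable_fst measurable_fst.
- exact: measurableT_comp measurable_snd measurable_fst.
- exact: measurable_snd.
Qed.
Lemma jbE (z : @V3 R) : jb z = (1 + \sum_(i < 3) cmp z i ^+ 2) `^ 2^-1.
Proof.
rewrite /jb /enorm sqr_sqrtr ?sumr_ge0 // => [|i _]; last exact: sqr_ge0.
by rewrite powR12_sqrt // addr_ge0 // sumr_ge0 // => i _; exact: sqr_ge0.
Qed.
Lemma jb_ge1 (z : @V3 R) : 1 <= jb z.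
Proof.
rewrite /jb -{1}sqrtr1 ler_sqrt ?lerDl ?sqr_ge0 //.
by rewrite addr_ge0 ?sqr_ge0.
Qed.
Lemma mjb d (T : measurableType d) (phi : T -> @V3 R) :
  (forall i, measurable_fun setT (fun p => cmp (phi p) i)) ->
  measurable_fun setT (fun p => jb (phi p)).
Proof.
move=> H.
rewrite (_ : (fun p => jb (phi p)) = (fun p => (1 + \sum_(i < 3) cmp (phi p) i ^+ 2) `^ 2^-1)); last first.
  by apply/funext => p; rewrite jbE.
apply: (measurableT_comp (measurable_powR _)).
apply: measurable_funD; first exact: measurable_cst.
apply: measurable_sum => i.
exact: measurable_funX.
Qed.

Lemma mW (a b s : mindex) : measurable_fun setT
  (fun p : R * @V3 R * @V3 R => W a b s p.1.1 p.1.2 p.2).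
Proof.
rewrite /W; apply: measurable_funM.
  apply: (measurableT_comp (measurable_powR _)).
  apply: mjb => i; exact: measurableT_comp (mcmp i) measurable_snd.
apply: (measurableT_comp (measurable_powR _)).
apply: mjb => i.
rewrite (_ : (fun p : R * @V3 R * @V3 R => _) = (fun p => cmp p.1.2 i - (p.1.1 + 1) * cmp p.2 i)); last first.
  by apply/funext => p; rewrite cmpB.
apply: measurable_funB.
  exact: measurableT_comp (mcmp i) (measurableT_comp measurable_snd measurable_fst).
apply: measurable_funM.
  apply: measurable_funD; last exact: measurable_cst.
  exact: measurableT_comp measurable_fst measurable_fst.
exact: measurableT_comp (mcmp i) measurable_snd.
Qed.

Lemma mk (c : R) : measurable_fun setT
  (fun p : R * @V3 R * @V3 R => (1 + p.1.1) `^ c).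
Proof.
apply: (measurableT_comp (measurable_powR _)).
apply: measurable_funD; first exact: measurable_cst.
exact: measurableT_comp measurable_fst measurable_fst.
Qed.

Local Notation V := (@V3 R).
Local Open Scope ereal_scope.

Definition I3 (T : R) (F : R * V * V -> R) : \bar R :=
  \int[@lebesgue_measure R]_(t in `[0%R, T]) \int[leb3]_x \int[leb3]_v (F (t, x, v))%:E.

Section F.
Variable F : R * V * V -> R.
Hypothesis mF : measurable_fun setT F.
Hypothesis F0 : forall p, (0 <= F p)%R.

Lemma secv (tx : R * V) : measurable_fun setT (fun v => (F (tx, v))%:E).
Proof.
apply/measurable_EFinP.
have h1 : measurable_fun setT (fun v : V => (tx, v)).
  by apply: measurable_fun_pair.
exact: (measurableT_comp mF h1).
Qed.

Lemma inner_meas : measurable_fun setT (fun tx : R * V => \int[leb3]_v (F (tx, v))%:E).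
Proof.
have := @measurable_fun_fubini_tonelli_F _ _ _ _ _ M3 (fun p => (F p)%:E).
apply; first exact/measurable_EFinP.
by move=> p; rewrite lee_fin.
Qed.

Lemma secx (t : R) : measurable_fun setT (fun x : V => \int[leb3]_v (F (t, x, v))%:E).
Proof.
have h1 : measurable_fun setT (fun x : V => (t, x)) by apply: measurable_fun_pair.
exact: (measurableT_comp inner_meas h1).
Qed.

Lemma mid_meas : measurable_fun setT (fun t : R => \int[leb3]_x \int[leb3]_v (F (t, x, v))%:E).
Proof.
have := @measurable_fun_fubini_tonelli_F _ _ _ _ _ M3 (fun q : R * V => \int[leb3]_v (F (q, v))%:E).
apply; first exact: inner_meas.
by move=> p; apply: integral_ge0 => v _; rewrite lee_fin.
Qed.

Lemma inner_ge0 tx : 0 <= \int[leb3]_v (F (tx, v))%:E.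
Proof. by apply: integral_ge0 => v _; rewrite lee_fin. Qed.

Lemma mid_ge0 t : 0 <= \int[leb3]_x \int[leb3]_v (F (t, x, v))%:E.
Proof. by apply: integral_ge0 => x _; exact: inner_ge0. Qed.

Lemma I3Z (T c : R) : (0 <= c)%R -> I3 T (fun p => c * F p)%R = c%:E * I3 T F.
Proof.
move=> c0; rewrite /I3.
rewrite -ge0_integralZl_EFin //; last 2 first.
- by move=> t _; exact: mid_ge0.
- exact: (measurable_funS measurableT (@subsetT _ _) mid_meas).
apply: eq_integral => t _.
rewrite -ge0_integralZl_EFin //; last 2 first.
- by move=> x _; exact: inner_ge0.
- exact: secx.
apply: eq_integral => x _.
rewrite -ge0_integralZl_EFin //; last 2 first.
- by move=> v _; rewrite lee_fin.
- exact: secv.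
Qed.
End F.

Lemma I3D (T : R) (F G : R * V * V -> R) :
  measurable_fun setT F -> measurable_fun setT G ->
  (forall p, (0 <= F p)%R) -> (forall p, (0 <= G p)%R) ->
  I3 T (fun p => F p + G p)%R = I3 T F + I3 T G.
Proof.
move=> mF mG F0 G0; rewrite /I3.
rewrite -ge0_integralD //; last 4 first.
- by move=> t _; exact: mid_ge0.
- exact: (measurable_funS measurableT (@subsetT _ _) (@mid_meas F mF F0)).
- by move=> t _; exact: mid_ge0.
- exact: (measurable_funS measurableT (@subsetT _ _) (@mid_meas G mG G0)).
apply: eq_integral => t _.
rewrite -ge0_integralD //; last 4 first.
- by move=> x _; exact: inner_ge0.
- exact: secx.
- by move=> x _; exact: inner_ge0.
- exact: secx.
apply: eq_integral => x _.
rewrite -ge0_integralD //; last 4 first.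
- by move=> v _; rewrite lee_fin.
- exact: secv.
- by move=> v _; rewrite lee_fin.
- exact: secv.
Qed.

Lemma I3le (T : R) (F G : R * V * V -> R) :
  measurable_fun setT F -> measurable_fun setT G ->
  (forall p, (0 <= F p)%R) -> (forall p, (0 <= G p)%R) ->
  (forall t x v, (0 <= t <= T)%R -> (F (t, x, v) <= G (t, x, v))%R) ->
  I3 T F <= I3 T G.
Proof.
move=> mF mG F0 G0 FG; rewrite /I3.
apply: ge0_le_integral => //.
- by move=> t _; exact: mid_ge0.
- exact: (measurable_funS measurableT (@subsetT _ _) (@mid_meas F mF F0)).
- exact: (measurable_funS measurableT (@subsetT _ _) (@mid_meas G mG G0)).
move=> t; rewrite /= in_itv /= => Ht.
apply: ge0_le_integral => //.
- by move=> x _; exact: inner_ge0.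
- exact: secx.
- exact: secx.
move=> x _.
apply: ge0_le_integral => //.
- by move=> v _; rewrite lee_fin.
- exact: secv.
- exact: secv.
by move=> v _; rewrite lee_fin; apply: FG.
Qed.
Local Close Scope ereal_scope.

Lemma young (e C u w x : R) : 0 < e -> C * (4 * e) = 1 -> 0 <= u -> 0 <= x <= w ->
  u * x <= e * u ^+ 2 + C * w ^+ 2.
Proof.
move=> e0 Ce u0 /andP[x0 xw].
have C0 : 0 <= C by nra.
have h1 : 0 <= C * (2 * e * u - w) ^+ 2 by rewrite mulr_ge0 // sqr_ge0.
have h2 : u * x <= u * w by rewrite ler_wpM2l.
have E : C * (2 * e * u - w) ^+ 2 = (C * (4 * e)) * (e * u ^+ 2) - (C * (4 * e)) * (u * w) + C * w ^+ 2 by ring.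
rewrite Ce !mul1r in E.
lra.
Qed.

Lemma kk (t delta : R) : 0 < delta ->
  1 / ((1 + t) `^ (1 + delta)) = ((1 + t) `^ (- (1 / 2) - delta / 2)) ^+ 2.
Proof.
move=> d0.
rewrite expr2 -powRD; last first.
  apply/implyP => /eqP H; exfalso; move: H; lra.
by rewrite div1r -powRN; congr (_ `^ _); lra.
Qed.

Lemma invpowE (t delta : R) :
  1 / ((1 + t) `^ (1 + delta)) = (1 + t) `^ (- (1 + delta)).
Proof. by rewrite div1r powRN. Qed.

Lemma pointwise (t delta e C W0 W1 D D' : R) : 0 < delta -> 0 < e -> C * (4 * e) = 1 ->
  0 <= W0 <= W1 ->
  1 / ((1 + t) `^ (1 + delta)) * W0 ^+ 2 * `|D| * `|D'| <=
  e * ((1 + t) `^ (- (1 / 2) - delta / 2) * W0 * D) ^+ 2 +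
  C * ((1 + t) `^ (- (1 / 2) - delta / 2) * W1 * D') ^+ 2.
Proof.
move=> d0 e0 Ce /andP[W00 W01].
rewrite kk //.
set k := (1 + t) `^ _.
have k0 : 0 <= k by exact: powR_ge0.
have -> : (k * W0 * D) ^+ 2 = (k * W0 * `|D|) ^+ 2.
  by rewrite !exprMn real_normK ?num_real.
have -> : (k * W1 * D') ^+ 2 = (k * W1 * `|D'|) ^+ 2.
  by rewrite !exprMn real_normK ?num_real.
have -> : k ^+ 2 * W0 ^+ 2 * `|D| * `|D'| = (k * W0 * `|D|) * (k * W0 * `|D'|).
  by rewrite !expr2; ring.
apply: young => //.
- by rewrite !mulr_ge0.
- rewrite !mulr_ge0 //=.
  by rewrite ler_wpM2r // ler_wpM2l.
Qed.
Lemma W_mono (a b s : mindex) (b' s' : {ffun 'I_3 -> 'I_11}) t (x v : V) :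
  primed b s b' s' -> W a b s t x v <= W a (mi_of b') (mi_of s') t x v.
Proof.
move=> /and3P[h1 h2 h3]; rewrite /W.
have H1 : (mabs (mi_of b'))%:R <= (mabs b)%:R :> R by rewrite ler_nat.
have H2 : (mabs (mi_of s'))%:R <= (mabs s)%:R :> R by rewrite ler_nat.
apply: ler_pM; rewrite ?powR_ge0 //; apply: ler_powR; rewrite ?jb_ge1 //.
- by rewrite /nu !natrD; lra.
- by rewrite /om !natrD; lra.
Qed.

Lemma W_ge0 (a b s : mindex) t (x v : V) : 0 <= W a b s t x v.
Proof. by rewrite /W mulr_ge0 // powR_ge0. Qed.

Lemma sum_bound (P : {ffun 'I_3 -> 'I_11} -> {ffun 'I_3 -> 'I_11} -> bool) (e : R) (X : \bar R) :
  0 <= e -> (0 <= X)%E ->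
  (\sum_(b' : {ffun 'I_3 -> 'I_11}) \sum_(s' : {ffun 'I_3 -> 'I_11} | P b' s') (e%:E * X)
   <= (e * (#|{ffun 'I_3 -> 'I_11}| * #|{ffun 'I_3 -> 'I_11}|)%:R)%:E * X)%E.
Proof.
move=> e0 X0.
under eq_bigr do rewrite -ge0_sume_distrl //.
rewrite -ge0_sume_distrl; last first.
  by move=> i _; apply: sume_ge0 => j _; rewrite lee_fin.
apply: lee_wpmul2r => //.
under eq_bigr do rewrite sumEFin.
rewrite sumEFin lee_fin.
apply: (@le_trans _ _ (\sum_(b' : {ffun 'I_3 -> 'I_11}) \sum_(s' : {ffun 'I_3 -> 'I_11}) e)).
  apply: ler_sum => b' _; rewrite big_mkcond /=; apply: ler_sum => s' _.
  by case: ifP.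
rewrite sumr_const sumr_const -mulrnA mulr_natr.
done.
Qed.
End S.
Arguments I3 {R}.
Arguments I3Z {R}.
Arguments I3D {R}.
Arguments I3le {R}.
Arguments mk {R}.
Arguments mW {R}.
Arguments pointwise {R}.
Arguments W_mono {R}.
Arguments W_ge0 {R}.
Arguments invpowE {R}.
Arguments sum_bound {R}.

Local Open Scope ring_scope.
Theorem proposition7p3 (R : realType) (gam d0 : R) :
  0 <= gam < 1 -> 0 < d0 ->
  exists eps0 : R, 0 < eps0 /\
  forall eta : R, 0 < eta -> exists Ceta : R, 0 < Ceta /\
  forall (a b s : @mindex), (mabs a + mabs b + mabs s <= 10)%N ->
  forall (delta eps Tboot : R) (f_ini : V3 -> V3 -> R) (f : phasefun),
    0 < delta < 1 / 8 ->
    0 <= eps <= eps0 ->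
    initial_small d0 eps f_ini ->
    0 < Tboot ->
    regular gam Tboot f ->
    (forall a' b' s' : mindex, measurable_fun setT
       (fun p : R * V3 * V3 => Dop a' b' s' (gof d0 delta f) p.1.1 p.1.2 p.2)) ->
    (forall t x v, 0 <= t < Tboot -> 0 <= f t x v) ->
    (forall x v, f 0 x v = f_ini x v) ->
    landau_eq gam Tboot f ->
    (forall T, 0 <= T < Tboot ->
       (Enorm2 delta T (gof d0 delta f) <= ((eps `^ (3 / 4)) ^+ 2)%:E)%E) ->
    forall T, 0 <= T < Tboot ->
      (T2 delta T a b s (gof d0 delta f)
       <= eta%:E * wL2 delta T a b s (gof d0 delta f)
          + Ceta%:E *
            \sum_(b' : {ffun 'I_3 -> 'I_11})
              \sum_(s' : {ffun 'I_3 -> 'I_11} | primed b s b' s')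
                 wL2 delta T a (mi_of b') (mi_of s') (gof d0 delta f))%E.

Proof.
move=> _ _.
exists 1; split => //.
move=> eta eta0.
have cpos : (0 < #|{ffun 'I_3 -> 'I_11}|)%N.
  by apply/card_gt0P; exists [ffun => ord0].
set N : R := (#|{ffun 'I_3 -> 'I_11}| * #|{ffun 'I_3 -> 'I_11}|)%:R.
have N0 : 0 < N by rewrite /N ltr0n muln_gt0 cpos.
exists (N / (4 * eta)); split; first by rewrite divr_gt0 // mulr_gt0.
move=> a b s hab delta eps Tboot f_ini f /andP[dl0 dl1] _ _ _ _ hmeas _ _ _ _ T /andP[T0 _].
set h := gof d0 delta f.
set e := eta / N.
set C := N / (4 * eta).
have e0 : 0 < e by rewrite divr_gt0.
have Ce : C * (4 * e) = 1.
  rewrite /C /e; field.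
  by rewrite pnatr_eq0 -lt0n cpos gt_eqF.
have mD : forall a' b' s' : mindex, measurable_fun setT
    (fun p : R * V3 * V3 => Dop a' b' s' h p.1.1 p.1.2 p.2) by exact: hmeas.
have mA : forall a' b' s' : mindex, measurable_fun setT
    (fun p : R * V3 * V3 => ((1 + p.1.1) `^ (- (1 / 2) - delta / 2) * W a' b' s' p.1.1 p.1.2 p.2
       * Dop a' b' s' h p.1.1 p.1.2 p.2) ^+ 2).
  move=> a' b' s'; apply: measurable_funX.
  apply: measurable_funM; last exact: mD.
  apply: measurable_funM; first exact: mk.
  exact: mW.
have key : forall b' s', primed b s b' s' ->
  (\int[lebesgue_measure]_(t in `[0%R, T])
      \int[leb3]_x \int[leb3]_v
        ((1 / ((1 + t) `^ (1 + delta)) * W a b s t x v ^+ 2 *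
          `|Dop a b s h t x v| * `|Dop a (mi_of b') (mi_of s') h t x v|)%:E)
   <= e%:E * wL2 delta T a b s h + C%:E * wL2 delta T a (mi_of b') (mi_of s') h)%E.
  move=> b' s' Hp.
  pose G := fun p : R * V3 * V3 => 1 / ((1 + p.1.1) `^ (1 + delta)) * W a b s p.1.1 p.1.2 p.2 ^+ 2 *
          `|Dop a b s h p.1.1 p.1.2 p.2| * `|Dop a (mi_of b') (mi_of s') h p.1.1 p.1.2 p.2|.
  pose FA := fun p : R * V3 * V3 => ((1 + p.1.1) `^ (- (1 / 2) - delta / 2) * W a b s p.1.1 p.1.2 p.2
       * Dop a b s h p.1.1 p.1.2 p.2) ^+ 2.
  pose FB := fun p : R * V3 * V3 => ((1 + p.1.1) `^ (- (1 / 2) - delta / 2) * W a (mi_of b') (mi_of s') p.1.1 p.1.2 p.2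
       * Dop a (mi_of b') (mi_of s') h p.1.1 p.1.2 p.2) ^+ 2.
  change (I3 T G <= e%:E * I3 T FA + C%:E * I3 T FB)%E.
  have C0 : 0 <= C by rewrite /C ltW // divr_gt0 // mulr_gt0.
  have mFA : measurable_fun setT FA by exact: mA.
  have mFB : measurable_fun setT FB by exact: mA.
  have FA0 : forall p, 0 <= FA p by move=> p; exact: sqr_ge0.
  have FB0 : forall p, 0 <= FB p by move=> p; exact: sqr_ge0.
  rewrite -(I3Z FA mFA FA0 T _ (ltW e0)) -(I3Z FB mFB FB0 T _ C0).
  rewrite -I3D; last 4 first.
  - exact: measurable_funM (measurable_cst _) mFA.
  - exact: measurable_funM (measurable_cst _) mFB.
  - by move=> p; rewrite mulr_ge0 // ltW.
  - by move=> p; rewrite mulr_ge0.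
  apply: I3le.
  - rewrite /G.
    rewrite (_ : (fun p : R * V3 * V3 => _) = (fun p : R * V3 * V3 => (1 + p.1.1) `^ (- (1 + delta)) * W a b s p.1.1 p.1.2 p.2 ^+ 2 *
          `|Dop a b s h p.1.1 p.1.2 p.2| * `|Dop a (mi_of b') (mi_of s') h p.1.1 p.1.2 p.2|)); last first.
      by apply/funext => p; rewrite invpowE.
    apply: measurable_funM; last exact: measurableT_comp (@normr_measurable R setT) (mD _ _ _).
    apply: measurable_funM; last exact: measurableT_comp (@normr_measurable R setT) (mD _ _ _).
    apply: measurable_funM; first exact: mk.
    exact: measurable_funX (mW _ _ _).
  - apply: measurable_funD.
      exact: measurable_funM (measurable_cst _) mFA.
    exact: measurable_funM (measurable_cst _) mFB.
  - by move=> p; rewrite /G !mulr_ge0 ?sqr_ge0 ?invr_ge0 ?powR_ge0 ?divr_ge0.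
  - by move=> p; rewrite addr_ge0 // mulr_ge0 // ltW.
  move=> t x v _.
  rewrite /G /FA /FB /=.
  apply: pointwise => //.
  by rewrite W_ge0 W_mono.
rewrite /T2.
apply: (@le_trans _ _ (\sum_(b' : {ffun 'I_3 -> 'I_11}) \sum_(s' : {ffun 'I_3 -> 'I_11} | primed b s b' s')
   (e%:E * wL2 delta T a b s h + C%:E * wL2 delta T a (mi_of b') (mi_of s') h))%E).
  by apply: lee_sum => b' _; apply: lee_sum => s' Hp; exact: key.
have wge0 : forall a' b' s', (0 <= wL2 delta T a' b' s' h)%E.
  move=> a' b' s'; apply: integral_ge0 => t _; apply: integral_ge0 => x _.
  by apply: integral_ge0 => v _; rewrite lee_fin sqr_ge0.
under eq_bigr do rewrite big_split /=.
rewrite big_split /=.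
rewrite ge0_sume_distrr; last by move=> b' _; apply: sume_ge0 => s' _; exact: wge0.
rewrite [X in (_ <= _ + X)%E](eq_bigr (fun b' => \sum_(s' | primed b s b' s') (C%:E * wL2 delta T a (mi_of b') (mi_of s') h)%E)); last first.
  by move=> b' _; rewrite ge0_sume_distrr // => s' _; exact: wge0.
apply: leeD2r.
apply: le_trans (sum_bound _ _ _ (ltW e0) (wge0 _ _ _)) _.
by rewrite /e divfK // gt_eqF.
Qed.
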